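(* Let $A,B$ be abstract state spaces and let $\omega\in A\otimes_{\max}B$ be a bipartite state. Then $\omega$ is steering for its $B$-marginal $\omega^B$ if and only if the restriction $\hat\omega:[0,u_A]\to[0,\omega^B]$ is a strong quotient map of ordered sets.
   Context: An abstract state space is a pair $(A,u_A)$ where $A$ is a finite-dimensional real vector space with a closed, pointed, generating convex cone $A_+$, and $u_A$ is an interior point of the dual cone $A^*_+$. For $x\le y$ in an ordered vector space, $[x,y]=\{z: x\le z\le y\}$; thus $[0,u_A]\subseteq A^*$ is the set of effects. An observable on $A$ is a finite family of effects summing to $u_A$. $A\otimes_{\max}B$ is the space of bilinear forms on $A^*\times B^*$ nonnegative on $A^*_+\times B^*_+$ (every bipartite composite state lies in it); a state is such a form with $\omega(u_A,u_B)=1$; $\hat\omega:A^*\to B$ is $\hat\omega(a)(b)=\omega(a,b)$, and $\omega^B=\hat\omega(u_A)$. An ensemble for $\beta\in B_+$ is a finite family $\beta_i\in B_+$ with $\sum_i\beta_i=\beta$. $\omega$ is steering for its $B$-marginal if for every ensemble $\{\beta_i\}$ for $\omega^B$ there is an observable $\{x_i\}$ on $A$ with $\hat\omega(x_i)=\beta_i$ for all $i$. For partially ordered sets $X,Y$, an order-preserving surjection $p:X\to Y$ is a strong quotient map if every finite chain $y_1\le y_2\le\cdots\le y_n$ in $Y$ is the image of some chain $x_1\le x_2\le\cdots\le x_n$ in $X$, i.e., $y_i=p(x_i)$ for all $i$. *)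

(* Defs.v *)
From HB Require Import structures.
From mathcomp Require Import all_boot all_order all_algebra.
From mathcomp Require Import all_classical all_reals all_analysis.
Set Implicit Arguments. Unset Strict Implicit. Unset Printing Implicit Defensive.
Import Order.TTheory GRing.Theory Num.Theory.
Import numFieldNormedType.Exports.
Local Open Scope ring_scope.
Local Open Scope classical_set_scope.

(* Finite-dimensional real vector spaces are modelled as row spaces 'rV[R]_n
   (every n-dimensional real space is isomorphic to one).  The dual space A^*
   is identified with 'rV[R]_n via the canonical pairing below. *)
Definition pairing (R : realType) (n : nat) (f x : 'rV[R]_n) : R :=
  (f *m x^T) 0 0.

Definition convex_cone (R : realType) (n : nat) (K : set 'rV[R]_n) : Prop :=
  K 0 /\ (forall x y, K x -> K y -> K (x + y)) /\
  (forall (t : R) x, 0 <= t -> K x -> K (t *: x)).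

Definition pointed_cone (R : realType) (n : nat) (K : set 'rV[R]_n) : Prop :=
  forall x, K x -> K (- x) -> x = 0.

Definition generating_cone (R : realType) (n : nat) (K : set 'rV[R]_n) : Prop :=
  forall x, exists y z, K y /\ K z /\ x = y - z.

Definition dual_cone (R : realType) (n : nat) (K : set 'rV[R]_n) : set 'rV[R]_n :=
  [set f | forall x, K x -> 0 <= pairing f x].

Definition abstract_state_space (R : realType) (n : nat)
  (Apos : set 'rV[R]_n) (u : 'rV[R]_n) : Prop :=
  [/\ convex_cone Apos, closed Apos, pointed_cone Apos, generating_cone Apos
    & interior (dual_cone Apos) u].

Definition ord_le (R : realType) (n : nat) (K : set 'rV[R]_n) (x y : 'rV[R]_n) : Prop :=
  K (y - x).

Definition ord_interval (R : realType) (n : nat) (K : set 'rV[R]_n) (x y : 'rV[R]_n)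
  : set 'rV[R]_n := [set z | ord_le K x z /\ ord_le K z y].

(* Bilinear forms on A^* x B^* are represented by matrices W : 'M_(n,m):
   omega(a, b) = a W b^T.  *)
Definition bform (R : realType) (n m : nat) (W : 'M[R]_(n, m))
  (a : 'rV[R]_n) (b : 'rV[R]_m) : R := (a *m W *m b^T) 0 0.

(* omega-hat : A^* -> B, omega-hat(a)(b) = omega(a,b), i.e. a W *)
Definition omega_hat (R : realType) (n m : nat) (W : 'M[R]_(n, m))
  (a : 'rV[R]_n) : 'rV[R]_m := a *m W.

Definition in_max_tensor (R : realType) (n m : nat)
  (Apos : set 'rV[R]_n) (Bpos : set 'rV[R]_m) (W : 'M[R]_(n, m)) : Prop :=
  forall a b, dual_cone Apos a -> dual_cone Bpos b -> 0 <= bform W a b.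

Definition bipartite_state (R : realType) (n m : nat)
  (Apos : set 'rV[R]_n) (uA : 'rV[R]_n) (Bpos : set 'rV[R]_m) (uB : 'rV[R]_m)
  (W : 'M[R]_(n, m)) : Prop :=
  in_max_tensor Apos Bpos W /\ bform W uA uB = 1.

Definition marginalB (R : realType) (n m : nat) (W : 'M[R]_(n, m)) (uA : 'rV[R]_n)
  : 'rV[R]_m := omega_hat W uA.

Definition effects (R : realType) (n : nat) (Apos : set 'rV[R]_n) (uA : 'rV[R]_n)
  : set 'rV[R]_n := ord_interval (dual_cone Apos) 0 uA.

Definition observable (R : realType) (n : nat) (Apos : set 'rV[R]_n) (uA : 'rV[R]_n)
  (k : nat) (x : 'I_k -> 'rV[R]_n) : Prop :=
  (forall i, effects Apos uA (x i)) /\ \sum_(i < k) x i = uA.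

Definition ensemble (R : realType) (m : nat) (Bpos : set 'rV[R]_m) (beta : 'rV[R]_m)
  (k : nat) (b : 'I_k -> 'rV[R]_m) : Prop :=
  (forall i, Bpos (b i)) /\ \sum_(i < k) b i = beta.

Definition steering (R : realType) (n m : nat)
  (Apos : set 'rV[R]_n) (uA : 'rV[R]_n) (Bpos : set 'rV[R]_m)
  (W : 'M[R]_(n, m)) : Prop :=
  forall (k : nat) (b : 'I_k -> 'rV[R]_m), ensemble Bpos (marginalB W uA) b ->
  exists x : 'I_k -> 'rV[R]_n, observable Apos uA x /\
    forall i, omega_hat W (x i) = b i.

Definition strong_quotient_map (X Y : Type) (SX : set X) (leX : X -> X -> Prop)
  (SY : set Y) (leY : Y -> Y -> Prop) (p : X -> Y) : Prop :=
  [/\ (forall x, SX x -> SY (p x)),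
      (forall x x', SX x -> SX x' -> leX x x' -> leY (p x) (p x')),
      (forall y, SY y -> exists2 x, SX x & p x = y)
    & (forall (k : nat) (y : 'I_k -> Y),
        (forall i, SY (y i)) ->
        (forall (i j : 'I_k), (i <= j)%N -> leY (y i) (y j)) ->
        exists x : 'I_k -> X, [/\ forall i, SX (x i),
          (forall (i j : 'I_k), (i <= j)%N -> leX (x i) (x j))
          & forall i, p (x i) = y i])].

(* Main.v *)
Require Import Defs.
From HB Require Import structures.
From mathcomp Require Import all_boot all_order all_algebra.
From mathcomp Require Import all_classical all_reals all_analysis.
From mathcomp Require Import lra zify.
Import Order.TTheory GRing.Theory Num.Theory.
Import numFieldNormedType.Exports.
Local Open Scope ring_scope.
Local Open Scope classical_set_scope.

Set Implicit Arguments. Unset Strict Implicit.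

Section IP.
Variables (R : realType) (n : nat).
Implicit Types (a b c : 'rV[R]_n).

Lemma ipE a b : pairing a b = \sum_i a 0 i * b 0 i.
Proof. by rewrite /pairing !mxE; apply: eq_bigr => i _; rewrite mxE. Qed.

Lemma ipC a b : pairing a b = pairing b a.
Proof. by rewrite !ipE; apply: eq_bigr => i _; rewrite mulrC. Qed.

Lemma ipDl a b c : pairing (a + b) c = pairing a c + pairing b c.
Proof. by rewrite !ipE -big_split; apply: eq_bigr => i _; rewrite mxE mulrDl. Qed.

Lemma ipZl (t : R) a b : pairing (t *: a) b = t * pairing a b.
Proof. by rewrite !ipE mulr_sumr; apply: eq_bigr => i _; rewrite mxE mulrA. Qed.

Lemma ipNl a b : pairing (- a) b = - pairing a b.
Proof. by rewrite -scaleN1r ipZl mulN1r. Qed.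

Lemma ipBl a b c : pairing (a - b) c = pairing a c - pairing b c.
Proof. by rewrite ipDl ipNl. Qed.

Lemma ip0l b : pairing 0 b = 0.
Proof. by rewrite -(scale0r 0) ipZl mul0r. Qed.

Lemma ipDr a b c : pairing c (a + b) = pairing c a + pairing c b.
Proof. by rewrite ipC ipDl !(ipC _ c). Qed.
Lemma ipZr (t : R) a b : pairing b (t *: a) = t * pairing b a.
Proof. by rewrite ipC ipZl ipC. Qed.
Lemma ipBr a b c : pairing c (a - b) = pairing c a - pairing c b.
Proof. by rewrite ipC ipBl !(ipC _ c). Qed.

Lemma ip_ge0 a : 0 <= pairing a a.
Proof. by rewrite ipE; apply: sumr_ge0 => i _; exact: sqr_ge0. Qed.

Lemma ip_eq0 a : pairing a a = 0 -> a = 0.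
Proof.
rewrite ipE => /eqP; rewrite psumr_eq0 => [/allP H|i _]; last exact: sqr_ge0.
apply/rowP => i; rewrite mxE; have := H i (mem_index_enum i).
by rewrite implyTb mulf_eq0 orbb => /eqP.
Qed.

Lemma dual_cone_cc (K : set 'rV[R]_n) : convex_cone (dual_cone K).
Proof.
split; first by move=> x _; rewrite ip0l.
split; first by move=> f g Hf Hg x Kx; rewrite ipDl addr_ge0 ?Hf ?Hg.
by move=> t f t0 Hf x Kx; rewrite ipZl mulr_ge0 ?Hf.
Qed.

End IP.

Unset Implicit Arguments.

Lemma cont_sum (R : realType) (T : topologicalType) (I : Type) (r : seq I)
  (F : I -> T -> R) : (forall i, continuous (F i)) ->
  continuous (fun x => \sum_(i <- r) F i x).
Proof.
move=> HF; elim: r => [|a r IH].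
  have -> : (fun x => \sum_(i <- [::]) F i x) = (fun=> 0) by apply/funext => x; rewrite big_nil.
  exact: cst_continuous.
have -> : (fun x => \sum_(i <- a :: r) F i x) = (F a + (fun x => \sum_(i <- r) F i x))
  by apply/funext => x; rewrite big_cons.
by move=> x; apply: continuousD; [exact: HF | exact: IH].
Qed.

Lemma aux_le0 (R : realType) (a c : R) : 0 <= c ->
  (forall t, 0 < t -> t < 1 -> 2 * t * a <= t * t * c) -> a <= 0.
Proof.
move=> c0 H; rewrite leNgt; apply/negP => a0.
have d0 : 0 < c + 1 + a by lra.
pose t := a / (c + 1 + a).
have tE : t * (c + 1 + a) = a by rewrite /t mulfVK // gt_eqF.
have t0 : 0 < t by rewrite /t divr_gt0.
have t1 : t < 1 by rewrite /t ltr_pdivrMr // mul1r; lra.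
have := H t t0 t1.
have : t * c < a by nra.
nra.
Qed.

Lemma term_le_sum (R : realType) (m : nat) (F : 'I_m -> R) i :
  (forall j, 0 <= F j) -> F i <= \sum_j F j.
Proof.
move=> H; rewrite (bigD1 i) //= lerDl; apply: sumr_ge0 => j _; exact: H.
Qed.

Lemma bipolar (R : realType) (n : nat) (K : set 'rV[R]_n) :
  convex_cone K -> closed K -> forall y,
  (forall f, dual_cone K f -> 0 <= pairing f y) -> K y.
Proof.
move=> [K0 [KD KZ]] Kcl y Hy; apply: contrapT => Ky.
pose g k := pairing (y - k) (y - k).
have gE : g = fun k => \sum_i (y 0 i - k 0 i) * (y 0 i - k 0 i).
  by rewrite /g; apply: funext => k; rewrite ipE; apply: eq_bigr => i _; rewrite !mxE.
have gc : continuous g.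
  rewrite gE; apply: cont_sum => i x.
  have hb : {for x, continuous (fun k : 'rV[R]_n => y 0 i - k 0 i)}.
    apply: (continuousB (f:=fun=> y 0 i) (g:=fun k : 'rV[R]_n => k 0 i)).
      exact: cst_continuous.
    exact: coord_continuous.
  exact: (continuousM (s:=fun k : 'rV[R]_n => y 0 i - k 0 i) (t:=fun k : 'rV[R]_n => y 0 i - k 0 i) hb hb).
pose M := \sum_i `|y 0 i| + 1 + g 0.
pose A := K `&` [set k | g k <= g 0].
have Acl : closed A.
  apply: closedI => //; apply: (@preimage_closed _ _ g [set x | x <= g 0]).
    by move=> x _; exact: gc.
  exact: closed_le.
have Abox : A `<=` [set v : 'rV[R]_n | forall i, `[- M, M]%classic (v ord0 i)].
  move=> k [_ gk] i /=; rewrite in_itv /= -ler_norml.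
  have g0 : 0 <= g 0 by exact: ip_ge0.
  have h1 : (y 0 i - k 0 i) * (y 0 i - k 0 i) <= g 0.
    apply: le_trans gk; rewrite gE /=; apply: (@term_le_sum _ _ (fun j => (y 0 j - k 0 j) * (y 0 j - k 0 j))) => j.
    exact: sqr_ge0.
  have h2 : `|y 0 i - k 0 i| <= 1 + g 0.
    have [le1|gt1] := lerP `|y 0 i - k 0 i| 1; first by lra.
    have hs : `|y 0 i - k 0 i| * `|y 0 i - k 0 i| = (y 0 i - k 0 i) * (y 0 i - k 0 i).
      by rewrite -normrM ger0_norm // sqr_ge0.
    nra.
  have h3 : `|y 0 i| <= \sum_j `|y 0 j| by apply: (@term_le_sum _ _ (fun j => `|y 0 j|)) => j.
  have h4 : `|k 0 i| <= `|y 0 i| + `|y 0 i - k 0 i|.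
    by have := ler_normB (y 0 i) (y 0 i - k 0 i); rewrite opprB addrC subrK.
  rewrite /M; lra.
have Acp : compact A.
  apply: subclosed_compact Acl _ Abox.
  apply: (@rV_compact _ _ (fun=> `[- M, M]%classic)) => _.
  exact: segment_compact.
have A0 : A !=set0 by exists 0; split => //=.
have gcA : {within A, continuous g} by apply: continuous_subspaceT gc.
have [p /set_mem [Kp _] pmin] := compact_EVT_min A0 Acp gcA.
have pminK k : K k -> g p <= g k.
  move=> Kk; have [gk|gk] := lerP (g k) (g 0); first by apply/pmin/mem_set.
  by apply: le_trans (ltW gk); apply/pmin/mem_set; split => //=.
pose d := y - p.
have key1 k : K k -> pairing d k <= 0.
  move=> Kk; apply: (@aux_le0 _ _ (pairing k k)); first exact: ip_ge0.
  move=> t t0 t1; have := pminK _ (KD _ _ Kp (KZ t k (ltW t0) Kk)).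
  rewrite /g (_ : y - (p + t *: k) = d - t *: k); last by rewrite opprD addrA.
  rewrite !(ipBl, ipBr, ipZl, ipZr) (ipC k y) (ipC k p) (ipC p y).
  nra.
have key2 : 0 <= pairing d p.
  rewrite -oppr_le0 -ipNl.
  apply: (@aux_le0 _ _ (pairing p p)); first exact: ip_ge0.
  move=> t t0 t1; have := pminK _ (KZ (1 - t) p _ Kp).
  rewrite subr_ge0 (ltW t1) => /(_ isT).
  rewrite /g (_ : y - (1 - t) *: p = d + t *: p); last first.
    by rewrite scalerBl scale1r opprB addrA /d addrAC.
  rewrite !(ipBl, ipBr, ipDl, ipDr, ipZl, ipZr, ipNl) (ipC p y).
  nra.
have dn0 : d != 0.
  apply/eqP => d0; apply: Ky; rewrite (_ : y = p) //.
  by apply/eqP; rewrite -subr_eq0 -/d d0.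
have dd : 0 < pairing d d.
  rewrite lt_neqAle ip_ge0 andbT; apply/eqP => /esym /ip_eq0 d0.
  by move: dn0; rewrite d0 eqxx.
have fd : dual_cone K (- d) by move=> k Kk; rewrite ipNl oppr_ge0 key1.
have := Hy _ fd.
rewrite (_ : y = d + p); last by rewrite /d subrK.
rewrite ipNl ipDr; lra.
Qed.

Set Implicit Arguments. Unset Strict Implicit.


Lemma cc_sum (R : realType) (n : nat) (K : set 'rV[R]_n) (F : nat -> 'rV[R]_n) a b :
  convex_cone K -> (forall i, K (F i)) -> K (\sum_(a <= i < b) F i).
Proof. by move=> [K0 [KD _]] HF; apply: big_ind => //. Qed.

Lemma sum_diff (R : realType) (n : nat) (F : nat -> 'rV[R]_n) a b c :
  (a <= b)%N -> (b <= c)%N ->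
  \sum_(a <= i < c) F i - \sum_(a <= i < b) F i = \sum_(b <= i < c) F i.
Proof. by move=> ab bc; rewrite (big_cat_nat ab bc) /= addrC addrK. Qed.

Lemma omega_pos (R : realType) (n m : nat) (Apos : set 'rV[R]_n) (Bpos : set 'rV[R]_m)
  (W : 'M[R]_(n, m)) : convex_cone Bpos -> closed Bpos ->
  in_max_tensor Apos Bpos W -> forall a, dual_cone Apos a -> Bpos (omega_hat W a).
Proof.
move=> Bcc Bcl HW a Ha; apply: bipolar => // f Hf.
by rewrite ipC; exact: HW.
Qed.

Lemma sum_ordE (R : realType) (n k : nat) (e : 'I_k -> 'rV[R]_n) :
  \sum_(i < k) e i = \sum_(0 <= i < k) (if insub i is Some o then e o else 0).
Proof.
rewrite big_mkord; apply: eq_bigr => i _.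
by rewrite valK.
Qed.

Unset Implicit Arguments.

Theorem theorem5p4 (R : realType) (n m : nat)
  (Apos : set 'rV[R]_n) (uA : 'rV[R]_n) (Bpos : set 'rV[R]_m) (uB : 'rV[R]_m)
  (W : 'M[R]_(n, m)) :
  abstract_state_space Apos uA -> abstract_state_space Bpos uB ->
  bipartite_state Apos uA Bpos uB W ->
  steering Apos uA Bpos W <->
  strong_quotient_map (effects Apos uA) (ord_le (dual_cone Apos))
    (ord_interval Bpos 0 (marginalB W uA)) (ord_le Bpos) (omega_hat W).
Proof.
move=> [_ _ _ _ uint] [Bcc Bcl _ _ _] [Wt Wn].
have Dcc := dual_cone_cc Apos.
have [D0 [DD DZ]] := Dcc.
have [B0 [BD BZ]] := Bcc.
have uD : dual_cone Apos uA by exact: interior_subset.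
have hpos := omega_pos Bcc Bcl Wt.
have hB : forall a b, omega_hat W (a - b) = omega_hat W a - omega_hat W b.
  by move=> a b; rewrite /omega_hat mulmxBl.
have hsum : forall (F : nat -> 'rV[R]_n) a b,
    omega_hat W (\sum_(a <= i < b) F i) = \sum_(a <= i < b) omega_hat W (F i).
  by move=> F a b; rewrite /omega_hat mulmx_suml.
pose wB := marginalB W uA.
split.
- move=> steer.
  have chain : forall (k : nat) (y : 'I_k -> 'rV[R]_m),
      (forall i, ord_interval Bpos 0 wB (y i)) ->
      (forall (i j : 'I_k), (i <= j)%N -> ord_le Bpos (y i) (y j)) ->
      exists x : 'I_k -> 'rV[R]_n, [/\ forall i, effects Apos uA (x i),
        (forall (i j : 'I_k), (i <= j)%N -> ord_le (dual_cone Apos) (x i) (x j))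
        & forall i, omega_hat W (x i) = y i].
    move=> k y Hy Hc.
    pose Y j : 'rV[R]_m := if (insub j : option 'I_k) is Some i then y i else wB.
    pose Z j := if j is j'.+1 then Y j' else 0.
    have Ypos j : Bpos (Y j).
      rewrite /Y; case: insubP => [i _ _|_]; last exact: hpos.
      by have [+ _] := Hy i; rewrite /ord_le subr0.
    have Ymono j j' : (j <= j')%N -> Bpos (Y j' - Y j).
      move=> jj'; rewrite /Y; case: insubP => [i' Hi' vi'|Hj']; case: insubP => [i Hi vi|Hj].
      - by apply: Hc; rewrite vi vi'.
      - exfalso; move: Hj; rewrite -leqNgt; lia.
      - by have [_ +] := Hy i.
      - by rewrite subrr.
    have Zmono j j' : (j <= j')%N -> Bpos (Z j' - Z j).
      case: j => [|j]; case: j' => [|j'] //= jj'.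
      - by rewrite subrr.
      - by rewrite subr0.
      - exact: Ymono.
    pose b (i : 'I_k.+1) := Z i.+1 - Z i.
    have ens : ensemble Bpos (marginalB W uA) b.
      split; first by move=> i; apply: Zmono.
      rewrite -(big_mkord xpredT (fun i => Z i.+1 - Z i)) telescope_sumr //=.
      by rewrite /Y insubF ?ltnn // subr0.
    have [e [[He Hsum] Heb]] := steer _ b ens.
    pose ee i := if (insub i : option 'I_k.+1) is Some q then e q else 0.
    have He2 i : dual_cone Apos (ee i).
      rewrite /ee; case: insubP => [q _ _|_] //.
      by have [+ _] := He q; rewrite /ord_le subr0.
    have Hsum' : uA = \sum_(0 <= i < k.+1) ee i by rewrite -Hsum sum_ordE.
    have Hb' i : (i < k.+1)%N -> omega_hat W (ee i) = Z i.+1 - Z i.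
      move=> ik; rewrite /ee; case: insubP => [q _ vo|]; last by rewrite ik.
      by rewrite Heb /b vo.
    exists (fun j : 'I_k => \sum_(0 <= i < j.+1) ee i); split.
    + move=> j; split; rewrite /ord_le ?subr0; first exact: cc_sum.
      have := ltn_ord j => jk.
      rewrite [X in X - _]Hsum' sum_diff //; first exact: cc_sum.
      lia.
    + move=> i j ij; rewrite /ord_le sum_diff //; exact: cc_sum.

    + move=> j; rewrite hsum.
      have -> : \sum_(0 <= i < j.+1) omega_hat W (ee i) = \sum_(0 <= i < j.+1) (Z i.+1 - Z i).
        apply: eq_big_nat => i /andP [_ Hi]; apply: Hb'; have := ltn_ord j; lia.
      by rewrite telescope_sumr //= subr0 /Y valK.
  split.
  + move=> x [h0 h1]; rewrite /ord_interval /ord_le /= subr0.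
    move: h0 h1; rewrite /ord_le subr0 => h0 h1.
    by split; [exact: hpos | rewrite /wB /marginalB -hB; exact: hpos].
  + by move=> x x' _ _; rewrite /ord_le -hB; exact: hpos.
  + move=> y Hy.
    have Hyy : forall (i j : 'I_1), (i <= j)%N -> ord_le Bpos y y.
      by move=> i j _; rewrite /ord_le subrr.
    have [x [Hx _ Hxy]] := chain 1 (fun=> y) (fun=> Hy) Hyy.
    by exists (x ord0).
  + exact: chain.
- move=> [_ _ _ sqchain] k.
  case: k => [|k] b [Hb Hbs].
    exfalso; move: Hbs; rewrite big_ord0 => Hbs.
    have : pairing (marginalB W uA) uB = 1 := Wn.
    by rewrite -Hbs ip0l => /eqP; rewrite eq_sym oner_eq0.
  pose bn i := if (insub i : option 'I_k.+1) is Some q then b q else 0.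
  have bnpos i : Bpos (bn i) by rewrite /bn; case: insubP => [q _ _|_] //.
  pose Y j := \sum_(0 <= i < j) bn i.
  have hYk : Y k.+1 = wB by rewrite /Y -sum_ordE Hbs.
  have Hy' : forall j : 'I_k.+2, ord_interval Bpos 0 wB (Y j).
    move=> j; split; rewrite /ord_le ?subr0; first exact: cc_sum.
    have := ltn_ord j => jk.
    rewrite -hYk /Y sum_diff //; first exact: cc_sum.
  have Hc' : forall i j : 'I_k.+2, (i <= j)%N -> ord_le Bpos (Y i) (Y j).
    by move=> i j ij; rewrite /ord_le /Y sum_diff //; exact: cc_sum.
  have [x [Hx Hxc Hxy]] := sqchain k.+2 (fun j => Y j) Hy' Hc'.
  pose x' j : 'rV[R]_n := if j == 0%N then 0 else if (j < k.+1)%N then x (inord j) else uA.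
  have x'0 : x' 0%N = 0 by [].
  have x'K : x' k.+1 = uA by rewrite /x' /= ltnn.
  have x'mono j j' : (j <= j')%N -> (j' <= k.+1)%N -> dual_cone Apos (x' j' - x' j).
    move=> jj' j'k; rewrite /x' /=.
    case: j jj' => [|j] jj'; case: j' jj' j'k => [|j'] jj' j'k //=.
    - by rewrite subrr.
    - rewrite subr0; case: ifP => _ //.
      by have [+ _] := Hx (inord j'.+1); rewrite /ord_le subr0.
    - case: ifP => j'lt; case: ifP => jlt.
      + apply: Hxc; rewrite !inordK //; lia.
      + exfalso; move: jlt; rewrite ltnNge => /negbFE; lia.
      + by have [_ +] := Hx (inord j.+1).
      + by rewrite subrr.
  have hx'Y j : (j <= k.+1)%N -> omega_hat W (x' j) = Y j.
    move=> jk; rewrite /x' /=; case: j jk => [|j] jk /=.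
      by rewrite /omega_hat mul0mx /Y big_geq.
    case: ifP => jlt.
      by rewrite Hxy inordK //; lia.
    move/negbT: jlt; rewrite -leqNgt => jlt; have -> : j = k by lia.
    by rewrite hYk.
  exists (fun i : 'I_k.+1 => x' i.+1 - x' i); split; first split.
  + move=> i; have := ltn_ord i => ik; split; rewrite /ord_le.
      by rewrite subr0; apply: x'mono => //.
    have -> : uA - (x' i.+1 - x' i) = (x' k.+1 - x' i.+1) + (x' i - x' 0%N).
      by rewrite x'K x'0 subr0 opprB addrCA addrC.
    by apply: DD; apply: x'mono => //; lia.
  + by rewrite -(big_mkord xpredT (fun i => x' i.+1 - x' i)) telescope_sumr // x'K x'0 subr0.
  + move=> i; have := ltn_ord i => ik.
    rewrite hB !hx'Y //; last lia.
    by rewrite /Y big_nat_recr //= addrC addrK /bn valK.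
Qed.
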